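(* Consider the Krasovskii-regularized Lur'e system $\dot x\in F(x)$ of the context. Suppose Assumption 1 holds, that $\lim_{s\to0^+}\psi_i(s)>0$ and $\lim_{s\to0^-}\psi_i(s)<0$ for each $i$, and that $\overline\Gamma=\mathrm{diag}(\overline\gamma_1,\dots,\overline\gamma_p)$ with $\overline\gamma_i>0$ satisfies $\overline\Gamma CB+(CB)^\top\overline\Gamma>0$. Let $\nu,c>0$ be constants such that $|u|\ge c$ for all $u\in-\boldsymbol\Psi(y)$ and all $y$ with $0<|y|\le\nu$. Let $\lambda_1>0$ be the smallest eigenvalue of $\overline\Gamma CB+(CB)^\top\overline\Gamma$ and $\lambda_2:=|\overline\Gamma CA|$ (spectral norm). Define $\widetilde W(x):=W(Cx):=2\sum_{i=1}^p\overline\gamma_i\int_0^{C_ix}\psi_i(\sigma)\,d\sigma$. Then there exist $\mu\in(0,\nu]$ with $\omega:=\lambda_1\big(c-2\mu\lambda_2/\lambda_1\big)>0$, and $\alpha_4,\alpha_5\in\mathcal{K}_\infty$, such that $\alpha_4(|Cx|)\le W(Cx)\le\alpha_5(|Cx|)$ for all $x$ with $|x|\le\mu$, and $\sup\dot{\overline{\widetilde W}}_F(x)\le-c\,\omega$ for all $x$ with $|x|\le\mu$ and $Cx\neq0$ (with $\sup\emptyset=-\infty$).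
   Context: System: $\dot x=Ax+Bu$, $y=Cx$, $u=-\boldsymbol\psi(y)$, $x\in\mathbb{R}^n$, $u,y\in\mathbb{R}^p$, $\boldsymbol\psi(y)=(\psi_1(y_1),\dots,\psi_p(y_p))$; $C_i$ is the $i$-th row of $C$. Piecewise continuous: finitely many discontinuities on each bounded interval, continuous between them, finite one-sided limits. Krasovskii regularization: $\boldsymbol\Psi_i(s):=\bigcap_{\delta>0}\overline{\mathrm{co}}\,\psi_i(s+\delta[-1,1])$, $\boldsymbol\Psi(y):=\boldsymbol\Psi_1(y_1)\times\dots\times\boldsymbol\Psi_p(y_p)$, $F(x):=\{Ax-Bw:w\in\boldsymbol\Psi(Cx)\}$. Assumption 1: for each $i$, $\psi_i$ is piecewise continuous and there is $\zeta_i\in(0,+\infty]$ with $\psi_i(s)(\psi_i(s)-\zeta_is)\le0$ for all $s$ (for $\zeta_i=+\infty$: $\psi_i(s)s\ge0$). The generalized gradient of $\widetilde W$ is $\partial\widetilde W(x)=\{2C^\top\overline\Gamma w:w\in\boldsymbol\Psi(Cx)\}$, and the set-valued Lie derivative is $\dot{\overline{\widetilde W}}_F(x):=\{a\in\mathbb{R}:\exists f\in F(x),\ \langle v,f\rangle=a\ \forall v\in\partial\widetilde W(x)\}$. $\mathcal{K}_\infty$: continuous strictly increasing unbounded functions $\mathbb{R}_{\ge0}\to\mathbb{R}_{\ge0}$ vanishing at $0$. *)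

(* Defs.v *)
From HB Require Import structures.
From mathcomp Require Import all_boot all_order all_algebra.
From mathcomp Require Import all_classical all_reals all_analysis.
Set Implicit Arguments. Unset Strict Implicit. Unset Printing Implicit Defensive.
Import Order.TTheory GRing.Theory Num.Theory.
Import numFieldNormedType.Exports.
Local Open Scope classical_set_scope.
Local Open Scope ring_scope.

Section Defs.
Variable R : realType.

Definition vnorm k (v : 'cV[R]_k) : R := Num.sqrt (\sum_(i < k) v i 0 ^+ 2).

Definition vdot k (v w : 'cV[R]_k) : R := \sum_(i < k) v i 0 * w i 0.

Definition opnorm m k (M : 'M[R]_(m, k)) : R :=
  sup [set vnorm (M *m v) | v in [set v : 'cV[R]_k | vnorm v <= 1]].

Definition min_eigenvalue k (S : 'M[R]_k) : R := inf [set a : R | eigenvalue S a].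

Definition posdef k (S : 'M[R]_k) : Prop :=
  forall v : 'cV[R]_k, v != 0 -> 0 < (v^T *m S *m v) 0 0.

Definition piecewise_continuous (f : R -> R) : Prop :=
  (forall a b : R, exists s : seq R,
      forall x, a <= x <= b -> x \notin s -> {for x, continuous f}) /\
  (forall x : R, (exists l : R, f t @[t --> x^'+] --> l) /\
                 (exists l : R, f t @[t --> x^'-] --> l)).

(* Assumption 1 sector condition with zeta in (0, +oo] *)
Definition sector (f : R -> R) (zeta : \bar R) : Prop :=
  match zeta with
  | EFin z => 0 < z /\ forall s, f s * (f s - z * s) <= 0
  | +oo%E => forall s, 0 <= f s * s
  | -oo%E => False
  end.

Definition conv (S : set R) : set R :=
  [set y | exists (k : nat) (w z : 'I_k -> R),
      (forall i, 0 <= w i) /\ \sum_(i < k) w i = 1 /\ (forall i, S (z i)) /\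
      y = \sum_(i < k) w i * z i].

Definition Kras (f : R -> R) (s : R) : set R :=
  \bigcap_(d in [set d : R | 0 < d])
     closure (conv [set f t | t in [set t : R | s - d <= t <= s + d]]).

Definition KrasVec p (psi : 'I_p -> R -> R) (y : 'cV[R]_p) : set 'cV[R]_p :=
  [set w | forall i, Kras (psi i) (y i 0) (w i 0)].

Definition Fmap n p (A : 'M[R]_n) (B : 'M[R]_(n, p)) (C : 'M[R]_(p, n))
  (psi : 'I_p -> R -> R) (x : 'cV[R]_n) : set 'cV[R]_n :=
  [set A *m x - B *m w | w in KrasVec psi (C *m x)].

Definition oint (f : R -> R) (a : R) : R :=
  if 0 <= a then Rintegral (@lebesgue_measure R) `[0, a] f
  else - Rintegral (@lebesgue_measure R) `[a, 0] f.

Definition Wfun p (gam : 'I_p -> R) (psi : 'I_p -> R -> R) (y : 'cV[R]_p) : R :=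
  2 * \sum_(i < p) gam i * oint (psi i) (y i 0).

Definition Gam p (gam : 'I_p -> R) : 'M[R]_p := diag_mx (\row_i gam i).

(* generalized gradient of W~ as given: { 2 C^T Gamma w : w in Psi(Cx) } *)
Definition gradW n p (C : 'M[R]_(p, n)) (gam : 'I_p -> R)
  (psi : 'I_p -> R -> R) (x : 'cV[R]_n) : set 'cV[R]_n :=
  [set 2 *: (C^T *m Gam gam *m w) | w in KrasVec psi (C *m x)].

Definition lieW n p (A : 'M[R]_n) (B : 'M[R]_(n, p)) (C : 'M[R]_(p, n))
  (gam : 'I_p -> R) (psi : 'I_p -> R -> R) (x : 'cV[R]_n) : set R :=
  [set a | exists2 f, Fmap A B C psi x f &
             forall v, gradW C gam psi x v -> vdot v f = a].

Definition Kinf (al : R -> R) : Prop :=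
  al 0 = 0 /\ (forall s, 0 <= s -> 0 <= al s) /\
  {within [set s : R | 0 <= s], continuous al} /\
  (forall s t, 0 <= s -> s < t -> al s < al t) /\
  (forall M, exists s, 0 <= s /\ M < al s).

End Defs.

(* Main.v *)
Require Import Defs.
From HB Require Import structures.
From mathcomp Require Import all_boot all_order all_algebra.
From mathcomp Require Import all_classical all_reals all_analysis.
From mathcomp Require Import ring lra measurable_realfun.
Set Implicit Arguments. Unset Strict Implicit. Unset Printing Implicit Defensive.
Import Order.TTheory GRing.Theory Num.Theory.
Import numFieldNormedType.Exports.
Local Open Scope classical_set_scope.
Local Open Scope ring_scope.
Lemma sumsq_ge0 (R : realType) k (v : 'cV[R]_k) : 0 <= \sum_(i < k) v i 0 ^+ 2.
Proof. by apply: sumr_ge0 => i _; rewrite sqr_ge0. Qed.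

Lemma vnorm_ge0 (R : realType) k (v : 'cV[R]_k) : 0 <= vnorm v.
Proof. exact: sqrtr_ge0. Qed.

Lemma vnorm_sq (R : realType) k (v : 'cV[R]_k) : vnorm v ^+ 2 = \sum_(i < k) v i 0 ^+ 2.
Proof. by rewrite /vnorm sqr_sqrtr // sumsq_ge0. Qed.

Lemma vnormZ (R : realType) k (a : R) (v : 'cV[R]_k) : vnorm (a *: v) = `|a| * vnorm v.
Proof.
rewrite /vnorm (eq_bigr (fun i => a ^+ 2 * v i 0 ^+ 2)); last first.
  by move=> i _; rewrite !mxE exprMn.
by rewrite -mulr_sumr sqrtrM ?sqr_ge0 // sqrtr_sqr.
Qed.

Lemma vnormN (R : realType) k (v : 'cV[R]_k) : vnorm (- v) = vnorm v.
Proof. by rewrite -scaleN1r vnormZ normrN normr1 mul1r. Qed.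

Lemma vnorm_eq0 (R : realType) k (v : 'cV[R]_k) : vnorm v = 0 -> v = 0.
Proof.
move=> h; have : vnorm v ^+ 2 = 0 by rewrite h expr0n.
rewrite vnorm_sq => /eqP; rewrite psumr_eq0 => [|i _]; last by rewrite sqr_ge0.
move=> /allP H; apply/matrixP => i j; rewrite (ord1 j) mxE.
by have := H i (mem_index_enum _); rewrite /= sqrf_eq0 => /eqP.
Qed.

Lemma vnorm_gt0 (R : realType) k (v : 'cV[R]_k) : v != 0 -> 0 < vnorm v.
Proof.
move=> nz; rewrite lt_neqAle vnorm_ge0 andbT; apply/eqP => /esym/vnorm_eq0.
by move/eqP; rewrite (negbTE nz).
Qed.

Lemma cs_ineq (R : realType) k (u v : 'cV[R]_k) :
  vdot u v ^+ 2 <= (\sum_(i < k) u i 0 ^+ 2) * (\sum_(i < k) v i 0 ^+ 2).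
Proof.
set A := \sum_(i < k) u i 0 ^+ 2; set Cc := \sum_(i < k) v i 0 ^+ 2.
set B := vdot u v.
have key : forall t, 0 <= t ^+ 2 * A + 2 * t * B + Cc.
  move=> t.
  have -> : t ^+ 2 * A + 2 * t * B + Cc = \sum_(i < k) (t * u i 0 + v i 0) ^+ 2.
    rewrite /A /B /Cc /vdot mulr_sumr mulr_sumr -!big_split /=.
    by apply: eq_bigr => i _; ring.
  by apply: sumr_ge0 => i _; rewrite sqr_ge0.
have A0 : 0 <= A by exact: sumsq_ge0.
have C0 : 0 <= Cc by exact: sumsq_ge0.
have [Az|Ap] := eqVneq A 0.
  have uz : forall i, u i 0 = 0.
    move=> i; move/eqP: Az; rewrite psumr_eq0 => [|j _]; last by rewrite sqr_ge0.
    by move=> /allP /(_ i (mem_index_enum _)) /=; rewrite sqrf_eq0 => /eqP.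
  have -> : B = 0 by rewrite /B /vdot big1 // => i _; rewrite uz mul0r.
  by rewrite expr0n /= mulr_ge0.
have Ap' : 0 < A by rewrite lt_neqAle eq_sym Ap A0.
have := key (- B / A).
have -> : (- B / A) ^+ 2 * A + 2 * (- B / A) * B + Cc = Cc - B ^+ 2 / A.
  by field; rewrite Ap.
rewrite subr_ge0 ler_pdivrMr // mulrC => h; exact: h.
Qed.

Lemma vdot_le (R : realType) k (u v : 'cV[R]_k) : vdot u v <= vnorm u * vnorm v.
Proof.
have h := cs_ineq u v.
have e : (vnorm u * vnorm v) ^+ 2 = (\sum_(i < k) u i 0 ^+ 2) * (\sum_(i < k) v i 0 ^+ 2).
  by rewrite exprMn !vnorm_sq.
have p0 : 0 <= vnorm u * vnorm v by rewrite mulr_ge0 ?vnorm_ge0.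
rewrite -e in h; nra.
Qed.

Lemma vnorm0 (R : realType) k : vnorm (0 : 'cV[R]_k) = 0.
Proof. by rewrite /vnorm big1 ?sqrtr0 // => i _; rewrite mxE expr0n. Qed.

Definition frob (R : realType) m k (M : 'M[R]_(m, k)) : R :=
  Num.sqrt (\sum_(i < m) \sum_(j < k) M i j ^+ 2).

Lemma frob_ge0 (R : realType) m k (M : 'M[R]_(m, k)) : 0 <= frob M.
Proof. exact: sqrtr_ge0. Qed.

Lemma mv_bound (R : realType) m k (M : 'M[R]_(m, k)) (v : 'cV[R]_k) :
  vnorm (M *m v) <= frob M * vnorm v.
Proof.
have h : \sum_(i < m) (M *m v) i 0 ^+ 2 <=
         (\sum_(i < m) \sum_(j < k) M i j ^+ 2) * \sum_(j < k) v j 0 ^+ 2.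
  rewrite mulr_suml; apply: ler_sum => i _.
  have := cs_ineq (\col_j M i j) v.
  have -> : vdot (\col_j M i j) v = (M *m v) i 0.
    by rewrite /vdot mxE; apply: eq_bigr => j _; rewrite mxE.
  by under eq_bigr do rewrite mxE.
have e : (frob M * vnorm v) ^+ 2 =
   (\sum_(i < m) \sum_(j < k) M i j ^+ 2) * \sum_(j < k) v j 0 ^+ 2.
  rewrite exprMn vnorm_sq /frob sqr_sqrtr //.
  by apply: sumr_ge0 => i _; apply: sumr_ge0 => j _; rewrite sqr_ge0.
rewrite -e -vnorm_sq in h.
have p0 : 0 <= frob M * vnorm v by rewrite mulr_ge0 ?frob_ge0 ?vnorm_ge0.
have := vnorm_ge0 (M *m v); nra.
Qed.

Lemma opnorm_prop (R : realType) m k (M : 'M[R]_(m, k)) :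
  0 <= opnorm M /\ forall x, vnorm (M *m x) <= opnorm M * vnorm x.
Proof.
set S := [set vnorm (M *m v) | v in [set v : 'cV[R]_k | vnorm v <= 1]].
have hs : has_sup S.
  split; first by exists (vnorm (M *m 0)), 0 => //=; rewrite vnorm0.
  exists (frob M) => _ [v /= v1 <-].
  apply: (le_trans (mv_bound M v)).
  by rewrite -[leRHS]mulr1 ler_wpM2l ?frob_ge0.
have ub := sup_upper_bound hs.
have z0 : 0 <= opnorm M.
  by apply: ub; exists 0 => /=; rewrite ?mulmx0 vnorm0.
split => // x.
have [->|nz] := eqVneq x 0.
  by rewrite mulmx0 !vnorm0 mulr0.
have xp := vnorm_gt0 nz.
have H : vnorm (M *m ((vnorm x)^-1 *: x)) <= opnorm M.
  apply: ub; exists ((vnorm x)^-1 *: x) => //=.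
  by rewrite vnormZ ger0_norm ?invr_ge0 ?vnorm_ge0 // mulVf // gt_eqF.
move: H; rewrite -scalemxAr vnormZ ger0_norm ?invr_ge0 ?vnorm_ge0 //.
by move=> H; rewrite -ler_pdivrMr // mulrC.
Qed.

Lemma vdotE (R : realType) k (h X : 'cV[R]_k) : (h^T *m X) 0 0 = vdot h X.
Proof. by rewrite mxE; apply: eq_bigr => i _; rewrite mxE. Qed.

Lemma vdotDl (R : realType) k (a b X : 'cV[R]_k) : vdot (a + b) X = vdot a X + vdot b X.
Proof. by rewrite /vdot -big_split; apply: eq_bigr => i _; rewrite mxE mulrDl. Qed.
Lemma vdotDr (R : realType) k (a b X : 'cV[R]_k) : vdot X (a + b) = vdot X a + vdot X b.
Proof. by rewrite /vdot -big_split; apply: eq_bigr => i _; rewrite mxE mulrDr. Qed.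
Lemma vdotZl (R : realType) k (t : R) (a X : 'cV[R]_k) : vdot (t *: a) X = t * vdot a X.
Proof. by rewrite /vdot mulr_sumr; apply: eq_bigr => i _; rewrite mxE mulrA. Qed.
Lemma vdotZr (R : realType) k (t : R) (a X : 'cV[R]_k) : vdot X (t *: a) = t * vdot X a.
Proof. by rewrite /vdot mulr_sumr; apply: eq_bigr => i _; rewrite mxE mulrCA. Qed.
Lemma vdotC (R : realType) k (a X : 'cV[R]_k) : vdot a X = vdot X a.
Proof. by rewrite /vdot; apply: eq_bigr => i _; rewrite mulrC. Qed.
Lemma vdotNl (R : realType) k (a X : 'cV[R]_k) : vdot (- a) X = - vdot a X.
Proof. by rewrite -scaleN1r vdotZl mulN1r. Qed.
Lemma vdotNr (R : realType) k (a X : 'cV[R]_k) : vdot X (- a) = - vdot X a.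
Proof. by rewrite -scaleN1r vdotZr mulN1r. Qed.
Lemma vdotvv (R : realType) k (a : 'cV[R]_k) : vdot a a = vnorm a ^+ 2.
Proof. by rewrite vnorm_sq /vdot; apply: eq_bigr => i _; rewrite expr2. Qed.

Lemma vdot_sym (R : realType) k (M : 'M[R]_k) (a b : 'cV[R]_k) : M^T = M ->
  vdot a (M *m b) = vdot b (M *m a).
Proof.
move=> sM; rewrite -!vdotE.
transitivity (((a^T *m (M *m b))^T) 0 0); first by rewrite [RHS]mxE.
by rewrite !trmx_mul trmxK sM mulmxA.
Qed.

Lemma row_quad_cont (R : realType) p (S : 'M[R]_p) :
  continuous (fun u : 'rV[R]_p => \sum_(i < p) u 0 i * \sum_(j < p) S i j * u 0 j).
Proof.
apply: continuous_big; first exact: add_continuous.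
move=> i _ x; apply: continuousM; first exact: coord_continuous.
apply: continuous_big; first exact: add_continuous.
move=> j _ y; apply: continuousM; first exact: cst_continuous.
exact: coord_continuous.
Qed.

Lemma row_sq_cont (R : realType) p :
  continuous (fun u : 'rV[R]_p => \sum_(i < p) u 0 i * u 0 i).
Proof.
apply: continuous_big; first exact: add_continuous.
by move=> i _ x; apply: continuousM; exact: coord_continuous.
Qed.

Lemma min_on_sphere (R : realType) p (S : 'M[R]_p) : (0 < p)%N ->
  exists z : 'cV[R]_p, vnorm z = 1 /\
    forall w : 'cV[R]_p, vnorm w = 1 -> vdot z (S *m z) <= vdot w (S *m w).
Proof.
move=> p0.
pose f := fun u : 'rV[R]_p => \sum_(i < p) u 0 i * \sum_(j < p) S i j * u 0 j.
pose g := fun u : 'rV[R]_p => \sum_(i < p) u 0 i * u 0 i.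
have fE : forall w : 'cV[R]_p, vdot w (S *m w) = f w^T.
  move=> w; rewrite /f /vdot; apply: eq_bigr => i _; rewrite !mxE; congr (_ * _).
  by apply: eq_bigr => j _; rewrite mxE.
have gE : forall w : 'cV[R]_p, vnorm w ^+ 2 = g w^T.
  by move=> w; rewrite vnorm_sq /g; apply: eq_bigr => i _; rewrite !mxE expr2.
have n1 : forall w : 'cV[R]_p, (vnorm w = 1) <-> (g w^T = 1).
  move=> w; rewrite -gE; split; first by move=> ->; rewrite expr1n.
  move=> h; have := vnorm_ge0 w; have : (vnorm w - 1) * (vnorm w + 1) = 0.
    by rewrite -subr_sqr h expr1n subrr.
  move/eqP; rewrite mulf_eq0 => /orP [/eqP|/eqP]; lra.
set K := [set u : 'rV[R]_p | g u = 1].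
have K0 : K !=set0.
  exists (\row_j (j == Ordinal p0)%:R); rewrite /K /g /=.
  rewrite (bigD1 (Ordinal p0)) //= big1 ?addr0; first by rewrite !mxE eqxx mulr1.
  by move=> i /negbTE ni; rewrite !mxE ni mulr0.
have cK : compact K.
  apply: bounded_closed_compact.
    exists 1; split => // M M1 u Ku; rewrite /Num.norm /= mx_normrE.
    apply: bigmax_le; first lra.
    move=> [a b] _ /=; rewrite (ord1 a).
    have : u 0 b * u 0 b <= 1.
      rewrite -Ku /g (bigD1 b) //= lerDl; apply: sumr_ge0 => i _.
      by rewrite -expr2 sqr_ge0.
    move=> h; have [hb|hb] := lerP 0 (u 0 b);
      [rewrite ger0_norm // | rewrite ltr0_norm //]; nra.
  have := (continuous_closedP g).1 (@row_sq_cont R p) [set x : R | x = 1] (@closed_eq R 1).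
  by [].
have [u Ku umin] := EVT_min_rV K0 cK (continuous_subspaceT (@row_quad_cont R p S)).
exists u^T; split.
  by apply/n1; rewrite trmxK; move: Ku; rewrite inE.
move=> w /n1 w1; rewrite !fE trmxK; apply: umin; rewrite inE; exact: w1.
Qed.

Lemma eig_lemma (R : realType) p (S : 'M[R]_p) : (0 < p)%N -> S^T = S -> posdef S ->
  0 < min_eigenvalue S /\
  forall w : 'cV[R]_p, min_eigenvalue S * vnorm w ^+ 2 <= vdot w (S *m w).
Proof.
move=> p0 sS pd.
have [z [z1 zmin]] := min_on_sphere S p0.
set m := vdot z (S *m z).
have znz : z != 0 by apply/eqP => z0; move: z1; rewrite z0 vnorm0; lra.
have mpos : 0 < m by have := pd z znz; rewrite -mulmxA vdotE.
have bound : forall w : 'cV[R]_p, m * vnorm w ^+ 2 <= vdot w (S *m w).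
  move=> w; have [->|wnz] := eqVneq w 0.
    by rewrite vnorm0 expr0n /= mulr0 mulmx0 /vdot big1 // => i _; rewrite mxE mulr0.
  have wp := vnorm_gt0 wnz.
  have := zmin ((vnorm w)^-1 *: w).
  rewrite vnormZ ger0_norm ?invr_ge0 ?vnorm_ge0 // mulVf ?gt_eqF // => /(_ erefl).
  rewrite -scalemxAr vdotZl vdotZr -/m => h.
  have e : vdot w (S *m w) = vnorm w ^+ 2 * ((vnorm w)^-1 * ((vnorm w)^-1 * vdot w (S *m w))).
    by field; rewrite gt_eqF.
  rewrite e mulrC ler_wpM2l // ?sqr_ge0 //.
pose Mm := S - m%:M.
have MmT : Mm^T = Mm by rewrite /Mm linearB /= sS tr_scalar_mx.
have Bpos : forall h, 0 <= vdot h (Mm *m h).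
  move=> h; rewrite /Mm mulmxBl vdotDr vdotNr mul_scalar_mx vdotZr vdotvv.
  by have := bound h; lra.
have Bz : vdot z (Mm *m z) = 0.
  by rewrite /Mm mulmxBl vdotDr vdotNr mul_scalar_mx vdotZr vdotvv z1 expr1n mulr1 -/m subrr.
have Bhz : forall h, vdot h (Mm *m z) = 0.
  move=> h; set b := vdot h (Mm *m z); set be := vdot h (Mm *m h).
  have be0 : 0 <= be by exact: Bpos.
  have := Bpos (z + (- b / (be + 1)) *: h).
  rewrite mulmxDr -scalemxAr !(vdotDl, vdotDr, vdotZl, vdotZr) Bz.
  rewrite (vdot_sym z h MmT) -/b -/be.
  set t := - b / (be + 1).
  have ht : b = - (t * (be + 1)) by rewrite /t; field; apply: lt0r_neq0; lra.
  rewrite ht => H.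
  have t0 : t = 0.
    have : 0 <= - (t ^+ 2 * (be + 2)) by move: H; rewrite expr2; lra.
    rewrite oppr_ge0 pmulr_lle0; last lra.
    by move=> hh; apply/eqP; rewrite -sqrf_eq0 eq_le hh sqr_ge0.
  by rewrite t0 mul0r oppr0.
have Mz0 : Mm *m z = 0.
  apply/matrixP => i j; rewrite (ord1 j) [RHS]mxE.
  rewrite -(Bhz (delta_mx i 0)) /vdot (bigD1 i) //= big1 ?addr0.
    by rewrite [delta_mx i 0 i 0]mxE !eqxx mul1r.
  by move=> k /negbTE ki; rewrite [delta_mx i 0 k 0]mxE ki mul0r.
have Sz : S *m z = m *: z.
  by apply/eqP; rewrite -subr_eq0 -mul_scalar_mx -mulmxBl -/Mm Mz0.
have eig : eigenvalue S m.
  apply/eigenvalueP; exists z^T; last by rewrite trmx_eq0.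
  by rewrite -{1}sS -trmx_mul Sz linearZ.
have lb : lbound [set a | eigenvalue S a] m.
  move=> a /eigenvalueP [v vS vnz].
  have vp : 0 < vnorm v^T by apply: vnorm_gt0; rewrite trmx_eq0.
  have := bound v^T.
  have -> : vdot v^T (S *m v^T) = a * vnorm v^T ^+ 2.
    rewrite -vdotvv -vdotZr -vdotE -vdotE trmxK.
    rewrite -{1}sS -trmx_mul -linearZ /= -vS.
    by [].
  by rewrite ler_pM2r // exprn_gt0.
have infm : min_eigenvalue S = m.
  apply/le_anti/andP; split; last by apply: lb_le_inf => //; exists m.
  by apply: ge_inf => //; exists m.
by rewrite infm; split.
Qed.

Local Open Scope ereal_scope.

Lemma nn_mono (R : realType) (F G : R -> \bar R) :
  (forall x, 0 <= F x) -> (forall x, F x <= G x) ->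
  \int[@lebesgue_measure R]_x F x <= \int[@lebesgue_measure R]_x G x.
Proof.
move=> F0 FG.
have G0 : forall x, 0 <= G x by move=> x; exact: le_trans (F0 x) (FG x).
rewrite !ge0_integralTE //; apply: ereal_sup_le => _ [h hF <-]; exists h => //.
by move=> x; exact: le_trans (hF x) (FG x).
Qed.

Lemma cst_restrict_int (R : realType) (A : set R) (c : R) : measurable A ->
  \int[@lebesgue_measure R]_x ((cst c%:E) \_ A) x = c%:E * lebesgue_measure A.
Proof. by move=> mA; rewrite -integral_mkcond integral_cst. Qed.

Lemma meas_cst_restrict (R : realType) (A : set R) (c : R) : measurable A ->
  measurable_fun setT ((cst c%:E) \_ A).
Proof. by move=> mA; apply/(measurable_restrictT _ mA); exact: measurable_cst. Qed.

Lemma nn_bound (R : realType) (g : R -> \bar R) (u v a b : R) : (u <= v)%R ->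
  (0 <= a)%R -> (0 <= b)%R -> (forall x, 0 <= g x) -> g u \is a fin_num -> g v \is a fin_num ->
  (forall t, (u < t < v)%R -> a%:E <= g t <= b%:E) ->
  (a * (v - u))%:E <= \int[@lebesgue_measure R]_(x in `[u, v]) g x <= (b * (v - u))%:E.
Proof.
move=> uv a0 b0 g0 gu gv gab.
have mI : forall (i : interval R), measurable [set` i] by move=> i; exact: measurable_itv.
have lenO : lebesgue_measure `]u, v[%classic = (v - u)%:E.
  rewrite lebesgue_measure_itv /=; case: ifPn; first by rewrite lte_fin.
  rewrite lte_fin -leNgt => vu; have -> : v = u by apply/le_anti/andP.
  by rewrite subrr.
rewrite integral_mkcond; apply/andP; split.
  rewrite EFinM -lenO -cst_restrict_int //.
  apply: nn_mono => x; first by rewrite /patch; case: ifP => // _; rewrite lee_fin.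
  rewrite /patch; case: ifPn => [/set_mem /= xI|_].
    rewrite mem_set; first by have /andP[] := gab x xI.
    by move: xI; rewrite !in_itv /= => /andP[? ?]; apply/andP; split; apply/ltW.
  by case: ifP => // _; exact: g0.
pose H := fun x => ((cst b%:E) \_ `]u, v[%classic) x +
   (((cst (fine (g u))%:E) \_ [set u]) x + ((cst (fine (g v))%:E) \_ [set v]) x).
have Hge0 : forall (c : R) (A : set R), (0 <= c)%R -> forall x, 0 <= ((cst c%:E) \_ A) x.
  by move=> c A c0 x; rewrite /patch; case: ifP; rewrite // lee_fin.
have fgu : (0 <= fine (g u))%R by rewrite -lee_fin fineK.
have fgv : (0 <= fine (g v))%R by rewrite -lee_fin fineK.
apply: (@le_trans _ _ (\int[@lebesgue_measure R]_x H x)).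
  apply: nn_mono => x; first by rewrite /patch; case: ifP => // _.
  rewrite /H /patch; case: ifPn => [/set_mem /= xI|_]; last first.
    by rewrite !adde_ge0 //; [case: ifP; rewrite // lee_fin | case: ifP; rewrite // lee_fin | case: ifP; rewrite // lee_fin].
  move: xI; rewrite in_itv /= => /andP[ux xv].
  have [<-|xnu] := eqVneq u x.
    rewrite [in X in _ <= X + _]ifF; last first.
      by apply/negbTE; rewrite notin_setE /= in_itv /= ltxx.
    rewrite mem_set // fineK // add0e leeDl //.
    by case: ifP; rewrite // lee_fin.
  have [xv'|xnv] := eqVneq x v.
    rewrite [in X in _ <= X + _]ifF; last first.
      by apply/negbTE; rewrite notin_setE /= in_itv /= xv' ltxx andbF.
    rewrite [in X in _ <= _ + (X + _)]ifF; last first.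
      by apply/negbTE; rewrite notin_setE /= => xu; move: xnu; rewrite xu eqxx.
    by rewrite mem_set // xv' fineK // add0e add0e.
  have xI : (u < x < v)%R.
    by rewrite !lt_neqAle ux xv xnu xnv.
  rewrite mem_set; last by rewrite /= in_itv /=.
  have /andP[_ gb] := gab x xI; apply: le_trans gb _.
  rewrite leeDl // adde_ge0 //.
    by case: ifP; rewrite // lee_fin.
  by case: ifP; rewrite // lee_fin.
rewrite /H ge0_integralD //; last 4 first.
- by move=> x _; exact: Hge0.
- exact: meas_cst_restrict.
- by move=> x _; rewrite adde_ge0 //; exact: Hge0.
- apply: emeasurable_funD; exact: meas_cst_restrict.
rewrite ge0_integralD //; last 4 first.
- by move=> x _; exact: Hge0.
- exact: meas_cst_restrict.
- by move=> x _; exact: Hge0.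
- exact: meas_cst_restrict.
rewrite !cst_restrict_int // !lebesgue_measure_set1 !mule0 !adde0 lenO -EFinM.
by [].
Qed.

Lemma fine_bound (R : realType) (x : \bar R) (lo hi : R) :
  lo%:E <= x <= hi%:E -> (lo <= fine x <= hi)%R.
Proof.
by case: x => [r||] /andP[h1 h2] //=; rewrite -!lee_fin ?h1 ?h2 //; move: h1 h2; rewrite ?leey ?leNye //.
Qed.

Lemma rint_gen (R : realType) (f : R -> R) (u v a b : R) : (u <= v)%R ->
  (0 <= a)%R -> (0 <= b)%R ->
  ((forall t, (u < t < v)%R -> (a <= f t <= b)%R) ->
     (a * (v - u) <= Rintegral (@lebesgue_measure R) `[u, v] f <= b * (v - u))%R) /\
  ((forall t, (u < t < v)%R -> (- b <= f t <= - a)%R) ->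
     (- (b * (v - u)) <= Rintegral (@lebesgue_measure R) `[u, v] f <= - (a * (v - u)))%R).
Proof.
move=> uv a0 b0.
set F := fun x => (f x)%:E.
have fpE : forall x, F^\+ x = (Num.max (f x) 0)%:E by move=> x; rewrite funeposE EFin_max.
have fnE : forall x, F^\- x = (Num.max (- f x) 0)%:E by move=> x; rewrite funenegE EFin_max.
have finp : forall x, F^\+ x \is a fin_num by move=> x; rewrite fpE.
have finn : forall x, F^\- x \is a fin_num by move=> x; rewrite fnE.
rewrite /Rintegral integralE; split => hf.
- have hP := @nn_bound R (F^\+) u v a b uv a0 b0 (funepos_ge0 F) (finp u) (finp v).
  have hN := @nn_bound R (F^\-) u v 0 0 uv (lexx _) (lexx _) (funeneg_ge0 F) (finn u) (finn v).
  have N0 : \int[lebesgue_measure]_(x in `[u, v]) F^\- x = 0.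
    apply/le_anti; rewrite andbC; have := hN _; rewrite mul0r; apply.
    by move=> t /hf /andP[h1 _]; rewrite fnE lee_fin max_r ?lexx //; lra.
  rewrite N0 sube0; apply: fine_bound; apply: hP => t /hf /andP [h1 h2].
  by rewrite fpE !lee_fin max_l //; [rewrite h1 h2 | lra].
- have hN := @nn_bound R (F^\-) u v a b uv a0 b0 (funeneg_ge0 F) (finn u) (finn v).
  have hP := @nn_bound R (F^\+) u v 0 0 uv (lexx _) (lexx _) (funepos_ge0 F) (finp u) (finp v).
  have P0 : \int[lebesgue_measure]_(x in `[u, v]) F^\+ x = 0.
    apply/le_anti; rewrite andbC; have := hP _; rewrite mul0r; apply.
    by move=> t /hf /andP[h1 h2]; rewrite fpE lee_fin max_r ?lexx //; lra.
  rewrite P0 add0e.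
  have : (a * (v - u))%:E <= \int[lebesgue_measure]_(x in `[u, v]) F^\- x <= (b * (v - u))%:E.
    apply: hN => t /hf /andP [h1 h2].
    by rewrite fnE !lee_fin max_l //; [apply/andP; split; lra | lra].
  move=> /fine_bound; rewrite fineN; lra.
Qed.

Local Close Scope ereal_scope.

Lemma oint_bound (R : realType) (f : R -> R) (a b d : R) : 0 <= a -> 0 <= b ->
  (forall t, 0 < t <= d -> a <= f t <= b) ->
  (forall t, - d <= t < 0 -> - b <= f t <= - a) ->
  forall s, `|s| <= d -> a * `|s| <= oint f s <= b * `|s|.
Proof.
move=> a0 b0 hr hl s sd; rewrite /oint; case: ifPn => s0.
- have H1 : forall t, 0 < t < s -> a <= f t <= b.
    move=> t /andP[h1 h2]; apply: hr; move: sd; rewrite ger0_norm // => h3.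
    apply/andP; split => //; lra.
  have := (rint_gen f s0 a0 b0).1 H1.
  by rewrite subr0 ger0_norm.
- rewrite -ltNge in s0.
  have H1 : forall t, s < t < 0 -> - b <= f t <= - a.
    move=> t /andP[h1 h2]; apply: hl; move: sd; rewrite ltr0_norm // => h3.
    apply/andP; split => //; lra.
  have := (rint_gen f (ltW s0) a0 b0).2 H1.
  rewrite sub0r ltr0_norm // => /andP[h1 h2]; apply/andP; split; lra.
Qed.

Lemma rlim (R : realType) (f : R -> R) (l : R) : 0 < l -> f t @[t --> 0^'+] --> l ->
  exists2 d, 0 < d & forall t, 0 < t <= d -> l / 2 <= f t <= 3 * l / 2.
Proof.
move=> l0 /cvgrPdist_lt /(_ (l / 2)) h.
have := h (ltac:(lra)).
case => e /= e0 He.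
exists (e / 2); first lra.
move=> t /andP[t0 te].
have : `|l - f t| < l / 2.
  apply: He => //=; rewrite sub0r normrN ger0_norm; lra.
rewrite ltr_norml => /andP[h1 h2]; apply/andP; split; lra.
Qed.

Lemma llim (R : realType) (f : R -> R) (l : R) : l < 0 -> f t @[t --> 0^'-] --> l ->
  exists2 d, 0 < d & forall t, - d <= t < 0 -> 3 * l / 2 <= f t <= l / 2.
Proof.
move=> l0 /cvgrPdist_lt /(_ (- l / 2)) h.
have := h (ltac:(lra)).
case => e /= e0 He.
exists (e / 2); first lra.
move=> t /andP[t0 te].
have : `|l - f t| < - l / 2.
  apply: He => //=; rewrite sub0r normrN ltr0_norm; lra.
rewrite ltr_norml => /andP[h1 h2]; apply/andP; split; lra.
Qed.

Lemma oint_local (R : realType) (f : R -> R) :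
  (exists2 l : R, 0 < l & f t @[t --> 0^'+] --> l) ->
  (exists2 l : R, l < 0 & f t @[t --> 0^'-] --> l) ->
  exists a b d : R, [/\ 0 < a, 0 < b, 0 < d &
    forall s, `|s| <= d -> a * `|s| <= oint f s <= b * `|s|].
Proof.
move=> [lr lr0 hr] [ll ll0 hl].
have [dr dr0 Hr] := rlim lr0 hr.
have [dl dl0 Hl] := llim ll0 hl.
exists (Num.min (lr / 2) (- ll / 2)), (Num.max (3 * lr / 2) (- (3 * ll / 2))),
  (Num.min dr dl).
have ha : 0 < Num.min (lr / 2) (- ll / 2) by rewrite lt_min; apply/andP; split; lra.
have hb : 0 < Num.max (3 * lr / 2) (- (3 * ll / 2)) by rewrite lt_max; apply/orP; left; lra.
split => //; first by rewrite lt_min dr0 dl0.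
apply: oint_bound; [exact: ltW | exact: ltW | |].
- move=> t /andP[t0]; rewrite le_min => /andP[tr _].
  have /andP[h1 h2] : lr / 2 <= f t <= 3 * lr / 2 by apply: Hr; rewrite t0 tr.
  apply/andP; split; [rewrite ge_min h1 // | rewrite le_max h2 //].
- move=> t /andP[]; rewrite lerNl le_min => /andP[_ tl] t0.
  have /andP[h1 h2] : 3 * ll / 2 <= f t <= ll / 2.
    by apply: Hl; rewrite t0 andbT lerNl.
  apply/andP; split.
    by rewrite lerNl le_max; apply/orP; right; lra.
  by rewrite lerNr ge_min; apply/orP; right; lra.
Qed.

Lemma Kinf_lin (R : realType) (k : R) : 0 < k -> Kinf (fun r => k * r).
Proof.
move=> k0; split; first by rewrite mulr0.
split; first by move=> s s0; rewrite mulr_ge0 // ltW.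
split.
  apply: continuous_subspaceT => x; apply: continuousM; first exact: cst_continuous.
  exact: cvg_id.
split; first by move=> s t _ st; rewrite ltr_pM2l.
move=> M; exists ((`|M| + 1) / k); split.
  by rewrite divr_ge0 // ?ltW // addr_ge0.
rewrite mulrC divfK ?gt_eqF //; have := ler_norm M; lra.
Qed.

Lemma hmin_prop (R : realType) p (x : 'I_p -> R) : (0 < p)%N -> (forall i, 0 < x i) ->
  0 < (\sum_(i < p) (x i)^-1)^-1 /\ forall i, (\sum_(i < p) (x i)^-1)^-1 <= x i.
Proof.
move=> p0 xp.
have le : forall i, (x i)^-1 <= \sum_(i < p) (x i)^-1.
  move=> i; rewrite (bigD1 i) //= lerDl; apply: sumr_ge0 => j _.
  by rewrite invr_ge0 ltW.
have sp : 0 < \sum_(i < p) (x i)^-1.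
  apply: (lt_le_trans _ (le (Ordinal p0))); by rewrite invr_gt0.
split; first by rewrite invr_gt0.
move=> i; rewrite -[leRHS]invrK lef_pV2 ?posrE ?invr_gt0 //.
Qed.

Lemma sum_sq_le (R : realType) (I : Type) (r : seq I) (x : I -> R) :
  (forall i, 0 <= x i) -> \sum_(i <- r) x i ^+ 2 <= (\sum_(i <- r) x i) ^+ 2.
Proof.
move=> x0; elim: r => [|j r IH]; first by rewrite !big_nil expr0n.
rewrite !big_cons.
have s0 : 0 <= \sum_(i <- r) x i by apply: sumr_ge0.
have := x0 j; nra.
Qed.

Lemma vnorm_le_sum (R : realType) k (y : 'cV[R]_k) : vnorm y <= \sum_(i < k) `|y i 0|.
Proof.
have h := @sum_sq_le R _ (index_enum 'I_k) (fun i => `|y i 0|) (fun i => normr_ge0 _).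
have e : vnorm y ^+ 2 = \sum_(i < k) `|y i 0| ^+ 2.
  by rewrite vnorm_sq; apply: eq_bigr => i _; rewrite real_normK ?num_real.
rewrite -e in h.
have s0 : 0 <= \sum_(i < k) `|y i 0| by apply: sumr_ge0.
have := vnorm_ge0 y; nra.
Qed.

Lemma coord_le (R : realType) k (y : 'cV[R]_k) i : `|y i 0| <= vnorm y.
Proof.
have h : `|y i 0| ^+ 2 <= vnorm y ^+ 2.
  rewrite vnorm_sq real_normK ?num_real // (bigD1 i) //= lerDl.
  by apply: sumr_ge0 => j _; rewrite sqr_ge0.
have := vnorm_ge0 y; have := normr_ge0 (y i 0); nra.
Qed.

Lemma vdot_mul (R : realType) m k (M : 'M[R]_(m, k)) (u : 'cV[R]_k) (v : 'cV[R]_m) :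
  vdot (M *m u) v = vdot u (M^T *m v).
Proof. by rewrite -!vdotE trmx_mul mulmxA. Qed.

Lemma oint_local3 (R : realType) (f : R -> R) :
  (exists2 l : R, 0 < l & f t @[t --> 0^'+] --> l) ->
  (exists2 l : R, l < 0 & f t @[t --> 0^'-] --> l) ->
  exists t : R * R * R, [/\ 0 < t.1.1, 0 < t.1.2, 0 < t.2 &
    forall s, `|s| <= t.2 -> t.1.1 * `|s| <= oint f s <= t.1.2 * `|s|].
Proof.
move=> h1 h2; have [a [b [d [? ? ? ?]]]] := oint_local h1 h2.
by exists (a, b, d).
Qed.

Unset Implicit Arguments.

Theorem proposition2 (R : realType) (n p : nat)
  (A : 'M[R]_n) (B : 'M[R]_(n, p)) (C : 'M[R]_(p, n))
  (psi : 'I_p -> R -> R) (zeta : 'I_p -> \bar R) (gam : 'I_p -> R)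
  (nu c : R) :
  (0 < p)%N ->
  (forall i, piecewise_continuous (psi i) /\ sector (psi i) (zeta i)) ->
  (forall i, exists2 l : R, 0 < l & psi i t @[t --> 0^'+] --> l) ->
  (forall i, exists2 l : R, l < 0 & psi i t @[t --> 0^'-] --> l) ->
  (forall i, 0 < gam i) ->
  posdef (Gam gam *m (C *m B) + (C *m B)^T *m Gam gam) ->
  0 < nu -> 0 < c ->
  (forall y : 'cV[R]_p, 0 < vnorm y <= nu ->
     forall w, KrasVec psi y w -> c <= vnorm (- w)) ->
  let lam1 := min_eigenvalue (Gam gam *m (C *m B) + (C *m B)^T *m Gam gam) in
  let lam2 := opnorm (Gam gam *m C *m A) in
  exists mu : R, [/\ 0 < mu, mu <= nu &
    let om := lam1 * (c - 2 * mu * lam2 / lam1) in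
    0 < om /\
    exists al4 al5 : R -> R, [/\ Kinf al4, Kinf al5,
      (forall x : 'cV[R]_n, vnorm x <= mu ->
         al4 (vnorm (C *m x)) <= Wfun gam psi (C *m x) <= al5 (vnorm (C *m x))) &
      (forall x : 'cV[R]_n, vnorm x <= mu -> C *m x != 0 ->
         (ereal_sup [set a%:E | a in lieW A B C gam psi x] <= (- (c * om))%:E)%E)]].
Proof.
move=> p0 _ hr hl gam0 pd nu0 c0 hc lam1 lam2.
set G := Gam gam.
set S := G *m (C *m B) + (C *m B)^T *m G.
have GT : G^T = G by rewrite /G /Gam tr_diag_mx.
have ST : S^T = S.
  by rewrite /S linearD /= trmx_mul [X in _ + X]trmx_mul trmxK GT addrC.
have [l1pos l1q] := eig_lemma p0 ST pd.
rewrite -/S -/lam1 in l1pos l1q.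
have [l2ge0 l2b] := opnorm_prop (G *m C *m A).
rewrite -/G -/lam2 in l2ge0 l2b.
have [abd habd] := choice (fun i => oint_local3 (hr i) (hl i)).
set ai := fun i => (abd i).1.1.
set bi := fun i => (abd i).1.2.
set di := fun i => (abd i).2.
have hai : forall i, 0 < ai i by move=> i; case: (habd i).
have hbi : forall i, 0 < bi i by move=> i; case: (habd i).
have hdi : forall i, 0 < di i by move=> i; case: (habd i).
have hoi : forall i s, `|s| <= di i -> ai i * `|s| <= oint (psi i) s <= bi i * `|s|.
  by move=> i; case: (habd i).
have [m0 mle] := hmin_prop p0 (fun i => mulr_gt0 (gam0 i) (hai i)).
set m := (\sum_(i < p) (gam i * ai i)^-1)^-1 in m0 mle.
have [dd0 ddle] := hmin_prop p0 hdi.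
set dd := (\sum_(i < p) (di i)^-1)^-1 in dd0 ddle.
set MM := \sum_(i < p) gam i * bi i.
have MMle : forall i, gam i * bi i <= MM.
  move=> i; rewrite /MM (bigD1 i) //= lerDl; apply: sumr_ge0 => j _.
  by rewrite mulr_ge0 // ltW.
have MM0 : 0 <= MM by apply: sumr_ge0 => j _; rewrite mulr_ge0 // ltW.
set F := frob C.
have F0 : 0 <= F by exact: frob_ge0.
set mu := Num.min (nu / (F + 1)) (Num.min (dd / (F + 1)) (lam1 * c / (4 * lam2 + 1))).
have F1 : 0 < F + 1 by lra.
have mu1 : mu <= nu / (F + 1) by rewrite /mu ge_min lexx.
have mu2 : mu <= dd / (F + 1) by rewrite /mu !ge_min lexx orbT.
have mu3 : mu <= lam1 * c / (4 * lam2 + 1) by rewrite /mu !ge_min lexx !orbT.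
have mu0 : 0 < mu.
  rewrite /mu !lt_min !divr_gt0 //; try lra.
  by rewrite mulr_gt0.
have Fmu_nu : F * mu <= nu.
  have : F * mu <= F * (nu / (F + 1)) by rewrite ler_wpM2l.
  have : F * (nu / (F + 1)) <= nu.
    by rewrite mulrA ler_pdivrMr //; nra.
  lra.
have Fmu_dd : F * mu <= dd.
  have : F * mu <= F * (dd / (F + 1)) by rewrite ler_wpM2l.
  have : F * (dd / (F + 1)) <= dd.
    by rewrite mulrA ler_pdivrMr //; nra.
  lra.
have munu : mu <= nu.
  apply: (le_trans mu1); rewrite ler_pdivrMr //; have := ltW nu0; nra.
have mul3 : mu * (4 * lam2 + 1) <= lam1 * c by rewrite -ler_pdivlMr //; lra.
have omE : lam1 * (c - 2 * mu * lam2 / lam1) = lam1 * c - 2 * mu * lam2.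
  by field; rewrite gt_eqF.
have ompos : 0 < lam1 * c - 2 * mu * lam2 by nra.
exists mu; split => //; rewrite omE; split => //.
exists (fun r => 2 * m * r), (fun r => 2 * (MM + 1) * r); split.
- by apply: Kinf_lin; rewrite mulr_gt0.
- by apply: Kinf_lin; rewrite mulr_gt0 //; lra.
- move=> x xmu; set y := C *m x.
  have yF : vnorm y <= F * mu.
    apply: (le_trans (mv_bound C x)); rewrite ler_wpM2l //.
  have ydi : forall i, `|y i 0| <= di i.
    move=> i; apply: (le_trans (coord_le y i)); apply: (le_trans yF).
    exact: (le_trans Fmu_dd (ddle i)).
  have sum1 : \sum_(i < p) gam i * (ai i * `|y i 0|) <= \sum_(i < p) gam i * oint (psi i) (y i 0).
    apply: ler_sum => i _; apply: ler_wpM2l; first exact: ltW.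
    by case/andP: (hoi i _ (ydi i)).
  have sum2 : \sum_(i < p) gam i * oint (psi i) (y i 0) <= \sum_(i < p) gam i * (bi i * `|y i 0|).
    apply: ler_sum => i _; apply: ler_wpM2l; first exact: ltW.
    by case/andP: (hoi i _ (ydi i)).
  have sum3 : m * \sum_(i < p) `|y i 0| <= \sum_(i < p) gam i * (ai i * `|y i 0|).
    rewrite mulr_sumr; apply: ler_sum => i _; rewrite mulrA ler_wpM2r //.
  have sum4 : \sum_(i < p) gam i * (bi i * `|y i 0|) <= MM * vnorm y.
    rewrite /MM mulr_suml; apply: ler_sum => i _; rewrite mulrA.
    apply: ler_wpM2l; [by rewrite mulr_ge0 // ltW | exact: coord_le].
  have hs := vnorm_le_sum y.
  have vy0 := vnorm_ge0 y.
  rewrite /Wfun; apply/andP; split.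
    have : m * vnorm y <= m * \sum_(i < p) `|y i 0| by rewrite ler_wpM2l // ltW.
    lra.
  nra.
- move=> x xmu Cx0.
  apply: ge_ereal_sup => _ [a [f [w hw fE] hv] <-]; rewrite lee_fin.
  have ha := hv (2 *: (C^T *m G *m w)) (ex_intro2 _ _ w hw erefl).
  rewrite -ha -fE.
  have yF : vnorm (C *m x) <= F * mu.
    apply: (le_trans (mv_bound C x)); rewrite ler_wpM2l //.
  have wc : c <= vnorm w.
    rewrite -vnormN; apply: (hc (C *m x)) hw.
    rewrite vnorm_gt0 //=; lra.
  have e1 : vdot (2 *: (C^T *m G *m w)) (A *m x - B *m w) =
      2 * vdot w (G *m C *m A *m x) - vdot w (S *m w).
    rewrite vdotZl vdot_mul trmx_mul trmxK GT mulmxBr vdotDr vdotNr.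
    rewrite /S mulmxDl vdotDr.
    have -> : vdot w ((C *m B)^T *m G *m w) = vdot w (G *m (C *m B) *m w).
      by rewrite -mulmxA -vdot_mul vdotC vdot_mul GT mulmxA.
    by rewrite !mulmxA; ring.
  rewrite e1.
  have b1 : vdot w (G *m C *m A *m x) <= vnorm w * (lam2 * mu).
    apply: (le_trans (vdot_le _ _)); rewrite ler_wpM2l ?vnorm_ge0 //.
    apply: (le_trans (l2b x)); rewrite ler_wpM2l //.
  have b2 := l1q w.
  set r := vnorm w in wc b1 b2 *.
  have r0 : 0 <= r by lra.
  have : 0 <= (r - c) * (lam1 * (r + c) - 2 * mu * lam2).
    apply: mulr_ge0; first lra.
    have : lam1 * c <= lam1 * r by rewrite ler_wpM2l // ltW.
    nra.
  nra.
Qed.
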